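(* Let $T \subseteq \mathbb{Z}_2^\omega$ be a thin set such that $T\cap X\neq\emptyset$ for every equivalence class $X$ of the relation $\sim$ on $\mathbb{Z}_2^\omega$. Then the game $\mathcal{G}(T)$ is undetermined, i.e. neither Ego nor Alter has a winning strategy in $\mathcal{G}(T)$.
   Context: $\mathbb{Z}_2^\omega$ is the set of infinite binary sequences indexed by $\omega=\{0,1,2,\dots\}$; $\mathbb{Z}_2^+=\bigcup_{n\ge1}\mathbb{Z}_2^n$ is the set of nonempty finite binary words. The Hamming distance is $\mathrm{hd}(x,y)=|\{k: x(k)\ne y(k)\}|\in\omega\cup\{\omega\}$, and $x\sim y$ iff $\mathrm{hd}(x,y)$ is finite. A set $T\subseteq\mathbb{Z}_2^\omega$ is thin if for every $n\in\omega$ the map $x\mapsto x|_{\omega\setminus\{n\}}$ is injective on $T$. For $F\subseteq \mathbb{Z}_2^\omega$, $\mathcal{G}(F)$ is the infinite two-player game of perfect information in which Ego and Alter alternately choose words in $\mathbb{Z}_2^+$, Ego moving first; the outcome is the concatenation of all moves, an element of $\mathbb{Z}_2^\omega$, and Ego wins iff the outcome lies in $F$. Strategies for Ego are functions $e:\bigcup_{n\ge0}(\mathbb{Z}_2^+)^n\to\mathbb{Z}_2^+$ of Alter's previous moves, strategies for Alter are functions $a:\bigcup_{n\ge1}(\mathbb{Z}_2^+)^n\to\mathbb{Z}_2^+$ of Ego's previous moves; a strategy is winning for a player if that player wins every play in which he follows it. *)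

(* Defs.v *)
From mathcomp Require Import all_boot.
From mathcomp Require Import boolp classical_sets cardinality.
Local Open Scope classical_set_scope.
Set Implicit Arguments. Unset Strict Implicit. Unset Printing Implicit Defensive.

Definition cantor := nat -> bool.

Definition word := {w : seq bool | 0 < size w}.

Definition hsim (x y : cantor) : Prop :=
  finite_set [set k : nat | x k <> y k].

Definition thin (T : cantor -> Prop) : Prop :=
  forall (n : nat) (x y : cantor), T x -> T y ->
    (forall k, k <> n -> x k = y k) -> x = y.

(* Ego: function of Alter's previous moves (any finite list,
   including the empty one). Alter: function of Ego's previous moves; the
   argument list is always nonempty in a play, so the value on [::] is
   irrelevant. *)
Definition ego_strategy := seq word -> word.
Definition alter_strategy := seq word -> word.

Fixpoint rounds (e : ego_strategy) (a : alter_strategy) (n : nat)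
  : seq word * seq word * seq word :=
  match n with
  | 0 => ([::], [::], [::])
  | n'.+1 =>
      let: (E, A, M) := rounds e a n' in
      let x := e A in
      let y := a (rcons E x) in
      (rcons E x, rcons A y, M ++ [:: x; y])
  end.

Definition prefix (e : ego_strategy) (a : alter_strategy) (n : nat) : seq bool :=
  flatten (map val (rounds e a n).2).

(* The outcome: concatenation of all moves. After k+1 rounds the prefix has
   length >= 2(k+1) > k, so its k-th bit is the k-th bit of the outcome. *)
Definition outcome (e : ego_strategy) (a : alter_strategy) : cantor :=
  fun k => nth false (prefix e a k.+1) k.

Definition ego_wins (F : cantor -> Prop) (e : ego_strategy) : Prop :=
  forall a : alter_strategy, F (outcome e a).

Definition alter_wins (F : cantor -> Prop) (a : alter_strategy) : Prop :=
  forall e : ego_strategy, ~ F (outcome e a).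

Definition undetermined (F : cantor -> Prop) : Prop :=
  ~ (exists e, ego_wins F e) /\ ~ (exists a, alter_wins F a).

(* Main.v *)
Require Import Defs.
From mathcomp Require Import all_boot.
From mathcomp Require Import boolp classical_sets cardinality.
From mathcomp Require Import zify.

Definition w0 : word := exist (fun w : seq bool => 0 < size w) [:: false] isT.

Definition mkword (l : seq bool) : word :=
  match l with
  | [::] => w0
  | b :: l' => exist (fun w : seq bool => 0 < size w) (b :: l') isT
  end.

Lemma mkwordK l : 0 < size l -> val (mkword l) = l.
Proof. by case: l. Qed.

Definition flip (D : seq nat) (s : seq bool) : seq bool :=
  mkseq (fun i => (i \in D) (+) nth false s i) (size s).

Lemma size_flip D s : size (flip D s) = size s.
Proof. by rewrite size_mkseq. Qed.

Lemma nth_flip D s i : i < size s -> nth false (flip D s) i = (i \in D) (+) nth false s i.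
Proof. by move=> h; rewrite nth_mkseq. Qed.

Lemma flip_cat D u v : all (fun j => j < size u) D -> flip D (u ++ v) = flip D u ++ v.
Proof.
move=> hD; apply: (@eq_from_nth _ false).
  by rewrite size_cat !size_flip size_cat.
move=> i; rewrite size_flip => hi.
rewrite nth_flip // !nth_cat size_flip.
case: ifP => hiu; first by rewrite nth_flip.
case hin: (i \in D) => //.
by move/allP: hD => /(_ _ hin); rewrite hiu.
Qed.

Lemma take_flip D s n : take n (flip D s) = flip D (take n s).
Proof.
apply: (@eq_from_nth _ false).
  by rewrite size_take !size_flip size_take.
move=> i; rewrite size_take size_flip => hi.
have his : i < size s by move: hi; case: ifP => // h1 h2; lia.
have hin : i < n by move: hi; case: ifP => // h1 h2; lia.
rewrite nth_take // !nth_flip ?nth_take //.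
by rewrite size_take; case: ifP.
Qed.

Lemma flip_id D s : all (fun j => size s <= j) D -> flip D s = s.
Proof.
move=> hD; apply: (@eq_from_nth _ false); first by rewrite size_flip.
move=> i; rewrite size_flip => hi; rewrite nth_flip //.
case hin: (i \in D) => //.
by move/allP: hD => /(_ _ hin); lia.
Qed.

Definition content (R : seq word -> word) (M : seq word) : seq bool :=
  flatten (mkseq (fun i => val (nth w0 M i) ++ val (R (take i.+1 M))) (size M)).

Lemma content_nil R : content R [::] = [::].
Proof. by []. Qed.

Lemma content_rcons R M x :
  content R (rcons M x) = content R M ++ (val x ++ val (R (rcons M x))).
Proof.
rewrite /content size_rcons mkseqS flatten_rcons nth_rcons ltnn eqxx.
rewrite take_oversize ?size_rcons //; congr (flatten _ ++ _).
rewrite /mkseq; apply/eq_in_map => i; rewrite mem_iota add0n => /andP [_ hi].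
rewrite nth_rcons hi -cats1 takel_cat //.
Qed.

Lemma content_cat R M N : exists t, content R (M ++ N) = content R M ++ t.
Proof.
elim/last_ind: N => [|N x IH]; first by exists [::]; rewrite !cats0.
case: IH => t IH.
by rewrite -rcons_cat content_rcons IH -catA; eexists.
Qed.

Lemma size_prefix e a n : n <= size (Defs.prefix e a n).
Proof.
rewrite /Defs.prefix; elim: n => [//|n IH] /=.
case: (rounds e a n) IH => [[E A] M] /= IH.
rewrite map_cat flatten_cat size_cat /=.
have h1 := valP (e A); have h2 := valP (a (rcons E (e A))); rewrite size_cat cats0; simpl in h1, h2; lia.
Qed.

Lemma ego_rounds (mv : nat -> word) a n :
  [/\ (rounds (fun A => mv (size A)) a n).1.1 = mkseq mv n,
      size (rounds (fun A => mv (size A)) a n).1.2 = n &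
      Defs.prefix (fun A => mv (size A)) a n = content a (mkseq mv n)].
Proof.
rewrite /Defs.prefix; elim: n => [//|n IH] /=.
case: (rounds _ a n) IH => [[E A] M] /= [-> hA IH].
rewrite size_rcons hA mkseqS; split => //.
by rewrite map_cat flatten_cat IH content_rcons /= cats0.
Qed.

Lemma alter_rounds (mv : nat -> word) e n :
  [/\ size (rounds e (fun E => mv (size E).-1) n).1.1 = n,
      (rounds e (fun E => mv (size E).-1) n).1.2 = mkseq mv n &
      Defs.prefix e (fun E => mv (size E).-1) n ++ val (e (mkseq mv n))
        = val (e [::]) ++ content e (mkseq mv n)].
Proof.
rewrite /Defs.prefix; elim: n => [|n IH] /=; first by rewrite cats0.
case: (rounds e _ n) IH => [[E A] M] /= [hE -> IH].
rewrite size_rcons hE /= mkseqS.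
rewrite map_cat flatten_cat content_rcons catA -IH /= cats0 -!catA; split => //.
Qed.

Definition sched (k : nat) : nat := logn 2 k.+1.
Definition Dof (p : nat) : seq nat := odflt [::] (@unpickle (seq nat) p).

Lemma sched_inf p N : exists k, N <= k /\ sched k = p.
Proof.
exists (2 ^ p * N.*2.+1).-1; split.
  have : 0 < 2 ^ p by rewrite expn_gt0.
  have : N.*2.+1 <= 2 ^ p * N.*2.+1 by rewrite leq_pmull // expn_gt0.
  lia.
rewrite /sched prednK ?muln_gt0 ?expn_gt0 //.
by rewrite mulnC logn_Gauss ?coprime2n /= ?odd_double // pfactorK.
Qed.

Lemma Dof_pickle l : Dof (pickle l) = l.
Proof. by rewrite /Dof pickleK. Qed.

Definition state := (seq bool * (nat -> seq word) * (nat -> nat))%type.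

Definition canstart (s0 : seq bool) (D : seq nat) (s : seq bool) :=
  all (fun j => (size s0 <= j) && (j < size s)) D.

Definition step (R : seq word -> word) (s0 : seq bool) (k : nat) (st : state) : state :=
  let: (s, M, pos) := st in
  let s' := rcons s false in
  let p := sched k in
  if (M p != [::]) || canstart s0 (Dof p) s' then
    let x := mkword (if M p == [::] then drop (size s0) (flip (Dof p) s')
                     else drop (pos p) s') in
    let M' := rcons (M p) x in
    let s'' := s' ++ val (R M') in
    (s'', fun q => if q == p then M' else M q,
          fun q => if q == p then size s'' else pos q)
  else (s', M, pos).

Fixpoint run R s0 (k : nat) : state :=
  match k with
  | 0 => (s0, fun _ => [::], fun _ => 0)
  | k'.+1 => step R s0 k' (run R s0 k')
  end.

Definition St R s0 k := (run R s0 k).1.1.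
Definition Mv R s0 k := (run R s0 k).1.2.
Definition Ps R s0 k := (run R s0 k).2.

Lemma St_step R s0 k : exists t, St R s0 k.+1 = St R s0 k ++ false :: t.
Proof.
rewrite /St /=; case: (run R s0 k) => [[s M] pos] /=.
case: ifP => _ /=; last by exists [::]; rewrite cats1.
by rewrite -cats1 -catA; eexists.
Qed.

Lemma St_mono R s0 k k' : k <= k' -> exists t, St R s0 k' = St R s0 k ++ t.
Proof.
move/subnK => <-; elim: (k' - k) => [|d [t IH]]; first by exists [::]; rewrite cats0.
have [u hu] := St_step R s0 (d + k).
by rewrite addSn hu IH -catA; eexists.
Qed.

Lemma size_St R s0 k : k + size s0 <= size (St R s0 k).
Proof.
elim: k => [//|k IH]; have [u hu] := St_step R s0 k.
rewrite hu size_cat /=; lia.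
Qed.

Lemma St_s0 R s0 k : exists t, St R s0 k = s0 ++ t.
Proof. by have [t ->] := @St_mono R s0 0 k (leq0n k); exists t. Qed.

Lemma Mv_step R s0 k p :
  Mv R s0 k.+1 p = Mv R s0 k p \/
  (sched k = p /\ exists x, Mv R s0 k.+1 p = rcons (Mv R s0 k p) x).
Proof.
rewrite /Mv /=; case: (run R s0 k) => [[s M] pos] /=.
case: ifP => _ /=; last by left.
case: eqP => [->|_]; last by left.
by right; split => //; eexists.
Qed.

Lemma Mv_mono R s0 k k' p : k <= k' -> exists t, Mv R s0 k' p = Mv R s0 k p ++ t.
Proof.
move/subnK => <-; elim: (k' - k) => [|d [t IH]]; first by exists [::]; rewrite cats0.
case: (Mv_step R s0 (d + k) p) => [->|[_ [x ->]]]; rewrite IH; first by eexists.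
by rewrite -cats1 -catA; eexists.
Qed.

Lemma sumn_ge (D : seq nat) d : d \in D -> d <= sumn D.
Proof.
elim: D => [//|x D IH] /=; rewrite in_cons => /orP [/eqP ->|/IH]; lia.
Qed.

Lemma Mv_move R s0 k :
  (Mv R s0 k (sched k) != [::]) || canstart s0 (Dof (sched k)) (rcons (St R s0 k) false) ->
  size (Mv R s0 k.+1 (sched k)) = (size (Mv R s0 k (sched k))).+1.
Proof.
rewrite /Mv /St /=; case: (run R s0 k) => [[s M] pos] /= ->.
by rewrite /= eqxx size_rcons.
Qed.

Lemma Mv_inf R s0 p : all (fun j => size s0 <= j) (Dof p) ->
  forall j, exists K, j < size (Mv R s0 K p).
Proof.
move=> hD; elim=> [|j [K hK]].
  have [k [hk hs]] := sched_inf p (sumn (Dof p)).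
  exists k.+1; rewrite -hs Mv_move //; rewrite hs.
  apply/orP; right; apply/allP => d hd.
  move/allP: hD => /(_ _ hd) -> /=.
  have := size_St R s0 k; have := @sumn_ge _ _ hd; rewrite size_rcons ltnS => h1 h2; apply: leq_trans h1 _; apply: leq_trans hk _; apply: leq_trans (leq_addr _ _) h2.
have [k [hk hs]] := sched_inf p (K + sumn (Dof p)).
have [t ht] := @Mv_mono R s0 K k p ltac:(lia).
exists k.+1; rewrite -hs Mv_move hs ht ?size_cat; first lia.
by rewrite -size_eq0 size_cat -lt0n addn_gt0 (leq_ltn_trans (leq0n j) hK).
Qed.

Lemma inv R s0 k p : Mv R s0 k p != [::] ->
  [/\ Ps R s0 k p <= size (St R s0 k), all (fun j => j < Ps R s0 k p) (Dof p) &
      s0 ++ content R (Mv R s0 k p) = flip (Dof p) (take (Ps R s0 k p) (St R s0 k))].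
Proof.
elim: k => [//|k IH].
have [t0 ht0] := St_s0 R s0 k.
move: ht0 IH; rewrite /Mv /Ps /St /=.
case: (run R s0 k) => [[s M] pos] /= ht0 IH.
case: ifP => hmove /=; last first.
  move=> /IH [h1 h2 h3]; split => //; first by rewrite size_rcons; lia.
  by rewrite -cats1 takel_cat.
case: (eqVneq p (sched k)) => [hp|hp] hne; last first.
  have [h1 h2 h3] := IH hne; split => //; first by rewrite size_cat size_rcons; lia.
  by rewrite -cats1 -catA takel_cat.
subst p; set p := sched k in IH hmove hne *; set D := Dof p in IH hmove *.
set s' := rcons s false in hmove hne *.
have hs' : s' = s0 ++ rcons t0 false by rewrite /s' ht0 rcons_cat.
case: (eqVneq (M p) [::]) => hM.
  rewrite hM eqxx in hne *; rewrite hM /= in hmove.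
  set x := drop (size s0) (flip D s').
  have hx : 0 < size x by rewrite /x size_drop size_flip hs' size_cat size_rcons; lia.
  rewrite content_rcons content_nil /= take_size mkwordK //.
  have hc : all (fun j => j < size s') D by apply/sub_all: hmove => j /andP [].
  have hc0 : all (fun j => size s0 <= j) D by apply/sub_all: hmove => j /andP [].
  rewrite flip_cat //; split => //.
  - apply/sub_all: hc => j; rewrite size_cat; lia.
  - rewrite catA; congr (_ ++ _).
    rewrite -{1}(cat_take_drop (size s0) (flip D s')) take_flip; congr (_ ++ _).
    by rewrite hs' take_size_cat // flip_id.
have [h1 h2 h3] := IH hM.
have hps : pos p < size s' by rewrite size_rcons.
try rewrite (negbTE hM).
set x := drop (pos p) s'.
have hx : 0 < size x by rewrite /x size_drop; lia.
rewrite content_rcons mkwordK // take_size catA h3.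
have ht : take (pos p) s = take (pos p) s' by rewrite /s' -cats1 takel_cat.
have hsz : size (take (pos p) s) = pos p by rewrite size_take; case: ifP => //; lia.
rewrite -flip_cat ?hsz // ht /x catA cat_take_drop; split => //.
apply: (sub_all _ h2) => j /=; rewrite size_cat; lia.
Qed.

Definition sinf R s0 k := nth false (St R s0 k.+1) k.

Lemma sinf_nth R s0 K k : k < size (St R s0 K) -> nth false (St R s0 K) k = sinf R s0 k.
Proof.
move=> hk; rewrite /sinf.
have hk1 : k < size (St R s0 k.+1) by have := size_St R s0 k.+1; lia.
have [t1 h1] := @St_mono R s0 K (maxn K k.+1) (leq_maxl _ _).
have [t2 h2] := @St_mono R s0 k.+1 (maxn K k.+1) (leq_maxr _ _).
have := congr1 (fun l => nth false l k) h1.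
rewrite h2 !nth_cat hk hk1 => ->. done.
Qed.

Lemma mv_exists R s0 p : all (fun j => size s0 <= j) (Dof p) ->
  exists mvf : nat -> word, forall K j, j < size (Mv R s0 K p) -> nth w0 (Mv R s0 K p) j = mvf j.
Proof.
move=> hD; have [f hf] := choice (@Mv_inf R s0 p hD).
exists (fun j => nth w0 (Mv R s0 (f j) p) j) => K j hj.
have [t1 h1] := @Mv_mono R s0 K (maxn K (f j)) p (leq_maxl _ _).
have [t2 h2] := @Mv_mono R s0 (f j) (maxn K (f j)) p (leq_maxr _ _).
have := congr1 (fun l => nth w0 l j) h1.
by rewrite h2 !nth_cat hj hf => ->.
Qed.

Lemma play_outcome R s0 p (P : nat -> seq bool) (mvf : nat -> word) :
  all (fun j => size s0 <= j) (Dof p) ->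
  (forall K j, j < size (Mv R s0 K p) -> nth w0 (Mv R s0 K p) j = mvf j) ->
  (forall n, n <= size (P n) /\ exists t, P n ++ t = s0 ++ content R (mkseq mvf n)) ->
  forall k, nth false (P k.+1) k = (k \in Dof p) (+) sinf R s0 k.
Proof.
move=> hD hmv hP k.
have [K hK] := @Mv_inf R s0 p hD k.
have hmk : mkseq mvf k.+1 = take k.+1 (Mv R s0 K p).
  apply: (@eq_from_nth _ w0); first by rewrite size_mkseq size_take; case: ifP => //; lia.
  move=> i; rewrite size_mkseq => hi.
  by rewrite nth_mkseq // nth_take // hmv //; lia.
have [hsz [t ht]] := hP k.+1.
have [u hu] := content_cat R (take k.+1 (Mv R s0 K p)) (drop k.+1 (Mv R s0 K p)).
rewrite cat_take_drop in hu.
have hne : Mv R s0 K p != [::] by rewrite -size_eq0 -lt0n (leq_ltn_trans (leq0n k) hK).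
have [h1 h2 h3] := @inv R s0 K p hne.
have e1 : nth false (P k.+1) k = nth false (flip (Dof p) (take (Ps R s0 K p) (St R s0 K))) k.
  rewrite -h3 hu -hmk catA -ht -catA nth_cat; case: ifP => //; lia.
have hlt : k < size (take (Ps R s0 K p) (St R s0 K)).
  rewrite -(size_flip (Dof p)) -h3 hu -hmk catA -ht !size_cat; lia.
rewrite e1 nth_flip // nth_take; last by move: hlt; rewrite size_take; case: ifP; lia.
rewrite sinf_nth //; move: hlt; rewrite size_take; case: ifP; lia.
Qed.

Lemma alter_engine (e : ego_strategy) p :
  all (fun j => size (val (e [::])) <= j) (Dof p) ->
  exists a : alter_strategy, forall k,
    outcome e a k = (k \in Dof p) (+) sinf e (val (e [::])) k.
Proof.
move=> hD; have [mvf hmv] := @mv_exists e (val (e [::])) p hD.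
exists (fun E => mvf (size E).-1) => k.
apply: (@play_outcome _ _ p _ mvf hD hmv) => n; split; first exact: size_prefix.
have [_ _ h] := alter_rounds mvf e n.
by exists (val (e (mkseq mvf n))).
Qed.

Lemma ego_engine (a : alter_strategy) p :
  exists e : ego_strategy, forall k,
    outcome e a k = (k \in Dof p) (+) sinf a [::] k.
Proof.
have hD : all (fun j => size ([::] : seq bool) <= j) (Dof p) by apply/allP.
have [mvf hmv] := @mv_exists a [::] p hD.
exists (fun A => mvf (size A)) => k.
apply: (@play_outcome _ _ p _ mvf hD hmv) => n; split; first exact: size_prefix.
have [_ _ h] := ego_rounds mvf a n.
by exists [::]; rewrite cats0 h.
Qed.

Theorem proposition8 (T : cantor -> Prop) :
  thin T ->
  (forall x : cantor, exists t, T t /\ hsim t x) ->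
  undetermined T.
Proof.
move=> hthin hT; split.
  move=> [e he].
  set n := size (val (e [::])).
  have [a0 h0] := @alter_engine e (pickle ([::] : seq nat)) ltac:(by rewrite Dof_pickle).
  have [a1 h1] := @alter_engine e (pickle [:: n]) ltac:(by rewrite Dof_pickle /= leqnn).
  have := hthin n _ _ (he a0) (he a1).
  have heq : forall k, k <> n -> outcome e a0 k = outcome e a1 k.
    move=> k hk; rewrite h0 h1 !Dof_pickle in_cons in_nil orbF.
    by case: eqP.
  move=> /(_ heq) /(congr1 (fun f => f n)).
  rewrite h0 h1 !Dof_pickle in_cons eqxx /=.
  by case: (sinf _ _ _).
move=> [a ha].
set x := sinf a [::].
have [t [Tt ht]] := hT x.
have [l hl] := (finite_seqP _).1 ht.
have [e he] := ego_engine a (pickle l).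
apply: (ha e).
suff -> : outcome e a = t by [].
apply/funext => k; rewrite he Dof_pickle -/x.
have := congr1 (fun S => S k) hl => /= hk.
case: (boolP (k \in l)) => hkl.
  have : t k <> x k by rewrite hk.
  by case: (t k); case: (x k).
have : ~ (t k <> x k) by rewrite hk; apply/negP.
by case: (t k); case: (x k) => //= H; exfalso; apply: H.
Qed.
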